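(* Let $(X,\tau)$ be a fuzzifying topological space such that $\tau_P(A\cap B)\ge\min(\tau_P(A),\tau_P(B))$ for all $A,B\subseteq X$. Then $$\vDash T_2^P(X,\tau)\otimes(L_PC(X,\tau))^2\to\forall x\forall U\big(U\in N^{P}_x\to\exists V(V\in N^{P}_x\wedge Cl_P(V)\subseteq U\wedge\Gamma_P(V))\big),$$ that is, for all $x\in X$ and $U\subseteq X$, $$\max\big(0,T_2^P(X,\tau)+2L_PC(X,\tau)-2\big)\le\min\Big(1,\ 1-N^P_x(U)+\sup_{V\subseteq X}\min\big(N^P_x(V),\ \inf_{y\in X\setminus U}N^P_y(X\setminus V),\ \Gamma_P(V)\big)\Big).$$
   Context: Łukasiewicz semantics: $[\varphi\otimes\psi]=\max(0,[\varphi]+[\psi]-1)$, $[\varphi\to\psi]=\min(1,1-[\varphi]+[\psi])$, $[\wedge]=\min$, $[\forall]=\inf$, $[\exists]=\sup$, $\vDash$ means value $1$; $(L_PC)^2=L_PC\otimes L_PC$; $[Cl_P(V)\subseteq U]=\inf_{y\notin U}(1-Cl_P(V)(y))$. A fuzzifying topology on $X$ is $\tau:P(X)\to[0,1]$ with $\tau(X)=1$, $\tau(A\cap B)\ge\min(\tau(A),\tau(B))$, $\tau(\bigcup A_\lambda)\ge\inf\tau(A_\lambda)$. $N_x(A)=\sup_{x\in B\subseteq A}\tau(B)$; $Cl(A)(x)=1-N_x(X\setminus A)$; for $\mu:X\to[0,1]$, $Int(\mu)(x)=\sup_{x\in B}\min(\tau(B),\inf_{y\in B}\mu(y))$. Pre-open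 degrees $\tau_P(A)=\inf_{x\in A}Int(Cl(A))(x)$; $N^P_x(A)=\sup_{x\in B\subseteq A}\tau_P(B)$; $Cl_P(A)(x)=1-N^P_x(X\setminus A)$. $T_2^P(X,\tau)=\inf_{x\ne y}\sup\{\min(N^P_x(B),N^P_y(C)):B\cap C=\emptyset\}$. For $G\subseteq X$: $(\tau_P/G)(B)=\sup\{\tau_P(V):V\cap G=B\}$; compactness degree of $G$ w.r.t. $\rho:P(G)\to[0,1]$: with $K(\Re,G)=\inf_{x\in G}\sup_{B\ni x}\Re(B)$, $[\Re\subseteq\rho]=\inf_B\min(1,1-\Re(B)+\rho(B))$, $\wp\le\Re$ pointwise, $FF(\wp)=1-\inf\{\delta\in[0,1]:\{B:\wp(B)>\delta\}\text{ finite}\}$, $\Gamma(G,\rho)=\inf_{\Re}\min\big(1,1-\max(0,K(\Re,G)+[\Re\subseteq\rho]-1)+\sup_{\wp\le\Re}\max(0,K(\wp,G)+FF(\wp)-1)\big)$; $\Gamma_P(G)=\Gamma(G,\tau_P/G)$. $L_PC(X,\tau)=\inf_{x\in X}\sup_{B\subseteq X}\max(0,N^P_x(B)+\Gamma_P(B)-1)$. *)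

(* Defs.v *)
From HB Require Import structures.
From mathcomp Require Import all_boot all_order all_algebra.
From mathcomp Require Import boolp classical_sets cardinality reals.
Set Implicit Arguments. Unset Strict Implicit. Unset Printing Implicit Defensive.
Import Order.TTheory GRing.Theory Num.Theory.
Local Open Scope classical_set_scope.
Local Open Scope ring_scope.

Section Fuzz.
Variable R : realType.

(* Sup / inf of a set of values in [0,1]; empty sup = 0, empty inf = 1
   (adding the neutral element does not change a nonempty sup/inf of
   [0,1]-values). *)
Definition ssup (E : set R) : R := sup (E `|` [set 0]).
Definition iinf (E : set R) : R := inf (E `|` [set 1]).

Variable X : Type.

Definition fuzzifying_topology (tau : set X -> R) : Prop :=
  (forall A, 0 <= tau A <= 1) /\
  tau setT = 1 /\
  (forall A B, tau (A `&` B) >= Num.min (tau A) (tau B)) /\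
  (forall F : set (set X), tau (\bigcup_(A in F) A) >= iinf [set tau A | A in F]).

Variable tau : set X -> R.

Definition Nbh (t : set X -> R) (x : X) (A : set X) : R :=
  ssup [set t B | B in [set B | B x /\ B `<=` A]].

Definition Cl (A : set X) (x : X) : R := 1 - Nbh tau x (~` A).

Definition Int (mu : X -> R) (x : X) : R :=
  ssup [set Num.min (tau B) (iinf [set mu y | y in B]) | B in [set B | B x]].

Definition tauP (A : set X) : R := iinf [set Int (Cl A) x | x in A].

Definition NP (x : X) (A : set X) : R := Nbh tauP x A.

Definition ClP (A : set X) (x : X) : R := 1 - NP x (~` A).

Definition T2P : R :=
  iinf [set ssup [set Num.min (NP xy.1 BC.1) (NP xy.2 BC.2)
                 | BC in [set BC : set X * set X | BC.1 `&` BC.2 = set0]]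
       | xy in [set xy : X * X | xy.1 <> xy.2]].

(* Fuzzy families on P(G) are represented as functions set X -> R that
   vanish outside the subsets of G. *)
Definition fam_on (G : set X) (Re : set X -> R) : Prop :=
  (forall B, 0 <= Re B <= 1) /\ (forall B, ~ (B `<=` G) -> Re B = 0).

Definition tauP_rel (G : set X) (B : set X) : R :=
  ssup [set tauP V | V in [set V | V `&` G = B]].

Definition Kdeg (Re : set X -> R) (G : set X) : R :=
  iinf [set ssup [set Re B | B in [set B | B x]] | x in G].

Definition incl_deg (Re rho : set X -> R) : R :=
  iinf [set Num.min 1 (1 - Re B + rho B) | B in [set B | True]].

Definition FF (wp : set X -> R) : R :=
  1 - iinf [set d | 0 <= d <= 1 /\ finite_set [set B | wp B > d]].

Definition Gamma (G : set X) (rho : set X -> R) : R :=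
  iinf [set Num.min 1 (1 - Num.max 0 (Kdeg Re G + incl_deg Re rho - 1)
          + ssup [set Num.max 0 (Kdeg wp G + FF wp - 1)
                 | wp in [set wp | fam_on G wp /\ forall B, wp B <= Re B]])
       | Re in [set Re | fam_on G Re]].

Definition GammaP (G : set X) : R := Gamma G (tauP_rel G).

Definition LPC : R :=
  iinf [set ssup [set Num.max 0 (NP x B + GammaP B - 1) | B in [set B | True]]
       | x in [set x | True]].

End Fuzz.

(* Main.v *)
Require Import Defs.
From HB Require Import structures.
From mathcomp Require Import all_boot all_order all_algebra.
From mathcomp Require Import boolp classical_sets cardinality reals.
From mathcomp Require Import lra.
Import Order.TTheory GRing.Theory Num.Theory.
Local Open Scope classical_set_scope.
Local Open Scope ring_scope.

Section SupInf.
Variable R : realType.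
Implicit Types (E : set R) (b c e : R).

Lemma ssup_ge0 E : 0 <= ssup E.
Proof.
rewrite /ssup; have [h|h] := pselect (has_ubound (E `|` [set 0])).
  by apply: ub_le_sup => //; right.
by rewrite sup_out // => -[].
Qed.

Lemma ssup_ub E b e : (forall y, E y -> y <= b) -> E e -> e <= ssup E.
Proof.
move=> hb he; rewrite /ssup; apply: ub_le_sup; last by left.
exists (Num.max b 0) => y [/hb|->]; rewrite le_max ?lexx ?orbT //.
by move=> ->.
Qed.

Lemma ssup_le E b : (forall y, E y -> y <= b) -> 0 <= b -> ssup E <= b.
Proof.
move=> hb b0; rewrite /ssup; apply: ge_sup; first by exists 0; right.
by move=> y [/hb|->].
Qed.

Lemma ssup_gt E c : 0 <= c -> c < ssup E -> exists2 e, E e & c < e.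
Proof.
move=> c0 /sup_gt => /(_ (ex_intro _ 0 (or_intror erefl))) [y [Ey|->]] cy.
  by exists y.
by move: cy; rewrite ltNge c0.
Qed.

Lemma iinf_le1 E : iinf E <= 1.
Proof.
rewrite /iinf; have [h|h] := pselect (has_lbound (E `|` [set 1])).
  by apply: ge_inf => //; right.
by rewrite inf_out // => -[].
Qed.

Lemma iinf_lb E b e : (forall y, E y -> b <= y) -> E e -> iinf E <= e.
Proof.
move=> hb he; rewrite /iinf; apply: ge_inf; last by left.
exists (Num.min b 1) => y [/hb|->]; rewrite ge_min ?lexx ?orbT //.
by move=> ->.
Qed.

Lemma iinf_ge E b : (forall y, E y -> b <= y) -> b <= 1 -> b <= iinf E.
Proof.
move=> hb b1; rewrite /iinf; apply: lb_le_inf; first by exists 1; right.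
by move=> y [/hb|->].
Qed.

Lemma iinf_lt E c : c <= 1 -> iinf E < c -> exists2 e, E e & e < c.
Proof.
move=> c1 /inf_lt => /(_ (ex_intro _ 1 (or_intror erefl))) [y [Ey|->]] cy.
  by exists y.
by move: cy; rewrite ltNge c1.
Qed.

End SupInf.
Arguments ssup_gt {R E c}.
Arguments iinf_lt {R E c}.
Arguments ssup_ge0 {R}.
Arguments iinf_le1 {R}.
Arguments ssup_ub {R E b e}.
Arguments iinf_lb {R E b e}.

Section Basic.
Variables (R : realType) (X : Type) (tau : set X -> R).
Hypothesis htau01 : forall A, 0 <= tau A <= 1.
Hypothesis htauT : tau setT = 1.

Lemma Nbh01 (t : set X -> R) x A : (forall A, 0 <= t A <= 1) ->
  0 <= Nbh t x A <= 1.
Proof.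
move=> ht; rewrite ssup_ge0 /=; apply: ssup_le => // _ [B _ <-].
by case/andP: (ht B).
Qed.

Lemma Nbh_ub (t : set X -> R) x A B : (forall A, t A <= 1) ->
  B x -> B `<=` A -> t B <= Nbh t x A.
Proof. by move=> ht Bx BA; apply: (@ssup_ub _ _ 1) => [_ [C _ <-]|]; [exact: ht|exists B]. Qed.

Lemma Nbh_gt (t : set X -> R) x A c : 0 <= c -> c < Nbh t x A ->
  exists B, [/\ B x, B `<=` A & c < t B].
Proof. by move=> c0 /(ssup_gt c0) [_ [B [Bx BA] <-] cB]; exists B. Qed.

Lemma Nbh_mono (t : set X -> R) x A A' : (forall A, 0 <= t A <= 1) ->
  A `<=` A' -> Nbh t x A <= Nbh t x A'.
Proof.
move=> ht AA'; apply: ssup_le; last by case/andP: (Nbh01 t x A' ht).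
move=> _ [B [Bx BA] <-]; apply: Nbh_ub => //; last exact: subset_trans AA'.
by move=> C; case/andP: (ht C).
Qed.

Lemma Cl01 A x : 0 <= Cl tau A x <= 1.
Proof. by rewrite /Cl; case/andP: (Nbh01 tau x (~` A) htau01) => h1 h2; apply/andP; split; lra. Qed.

Lemma Cl_mono A A' x : A `<=` A' -> Cl tau A x <= Cl tau A' x.
Proof.
move=> AA'; rewrite /Cl lerD2l lerN2; apply: Nbh_mono => //.
by apply: subsetC.
Qed.

Lemma iinf_img_ge0 (mu : X -> R) (B : set X) : (forall y, 0 <= mu y) ->
  0 <= iinf [set mu y | y in B].
Proof. by move=> h; apply: iinf_ge => // _ [y _ <-]. Qed.

Lemma Int01 (mu : X -> R) x : (forall y, 0 <= mu y) -> 0 <= Int tau mu x <= 1.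
Proof.
move=> h; rewrite ssup_ge0 /=; apply: ssup_le => // _ [B _ <-].
rewrite ge_min; case/andP: (htau01 B) => _ ->; by [].
Qed.

Lemma Int_mono (mu mu' : X -> R) x : (forall y, 0 <= mu y) ->
  (forall y, mu y <= mu' y) -> Int tau mu x <= Int tau mu' x.
Proof.
move=> h0 hle; apply: ssup_le; last exact: ssup_ge0.
move=> _ [B Bx <-]; apply: le_trans (_ : Num.min (tau B) (iinf [set mu' y | y in B]) <= _).
  rewrite le_min ge_min lexx /= ge_min; apply/orP; right.
  apply: iinf_ge; last exact: iinf_le1.
  move=> _ [y By <-]; apply: le_trans (hle y).
  by apply: (@iinf_lb _ _ 0) => [_ [z _ <-]|]; [exact: h0|exists y].
apply: (@ssup_ub _ _ 1) => [_ [C _ <-]|]; last by exists B.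
by rewrite ge_min; case/andP: (htau01 C) => _ ->.
Qed.

Lemma tauP01 A : 0 <= tauP tau A <= 1.
Proof.
rewrite iinf_le1 andbT; apply: iinf_ge => // _ [x _ <-].
by case/andP: (Int01 (Cl tau A) x (fun y => proj1 (andP (Cl01 A y)))).
Qed.

Lemma tauP_le1 A : tauP tau A <= 1. Proof. by case/andP: (tauP01 A). Qed.
Lemma tauP_ge0 A : 0 <= tauP tau A. Proof. by case/andP: (tauP01 A). Qed.

Lemma tauP_set0 : tauP tau set0 = 1.
Proof. by apply/eqP; rewrite eq_le iinf_le1 /=; apply: iinf_ge => // _ [x []]. Qed.

Lemma tauP_setT : tauP tau setT = 1.
Proof.
apply/eqP; rewrite eq_le iinf_le1 /=; apply: iinf_ge => // _ [x _ <-].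
have hCl : forall y, Cl tau setT y = 1.
  move=> y; rewrite /Cl setCT.
  suff -> : Nbh tau y set0 = 0 by rewrite subr0.
  apply/eqP; rewrite eq_le ssup_ge0 andbT; apply: ssup_le => // e [B [By B0] _].
  by have := B0 _ By.
apply: (@ssup_ub _ _ 1) => [_ [C _ <-]|]; first by rewrite ge_min; case/andP: (htau01 C) => _ ->.
exists setT => //; rewrite htauT; apply/eqP; rewrite eq_le ge_min lexx /= le_min lexx /=.
by apply: iinf_ge => // _ [y _ <-]; rewrite hCl.
Qed.

Lemma tauP_U A B : Num.min (tauP tau A) (tauP tau B) <= tauP tau (A `|` B).
Proof.
apply: iinf_ge; last by rewrite ge_min tauP_le1.
have h0 : forall A y, 0 <= Cl tau A y by move=> A0 y; case/andP: (Cl01 A0 y).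
move=> _ [z [Az|Bz] <-].
- rewrite ge_min; apply/orP; left; apply: le_trans (_ : Int tau (Cl tau A) z <= _).
    apply: (@iinf_lb _ _ 0) => [_ [w _ <-]|]; last by exists z.
    by case/andP: (Int01 (Cl tau A) w (h0 A)).
  by apply: Int_mono => // y; apply: Cl_mono => ? ?; left.
- rewrite ge_min; apply/orP; right; apply: le_trans (_ : Int tau (Cl tau B) z <= _).
    apply: (@iinf_lb _ _ 0) => [_ [w _ <-]|]; last by exists z.
    by case/andP: (Int01 (Cl tau B) w (h0 B)).
  by apply: Int_mono => // y; apply: Cl_mono => ? ?; right.
Qed.


Lemma NP01 x A : 0 <= NP tau x A <= 1.
Proof. by apply: Nbh01 => A0; apply: tauP01. Qed.
Lemma NP_le1 x A : NP tau x A <= 1. Proof. by case/andP: (NP01 x A). Qed.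
Lemma NP_ge0 x A : 0 <= NP tau x A. Proof. by case/andP: (NP01 x A). Qed.

Lemma NP_ub x A B : B x -> B `<=` A -> tauP tau B <= NP tau x A.
Proof. by apply: Nbh_ub; exact: tauP_le1. Qed.

Lemma NP_gt x A c : 0 <= c -> c < NP tau x A ->
  exists B, [/\ B x, B `<=` A & c < tauP tau B].
Proof. exact: (@Nbh_gt (tauP tau)). Qed.

End Basic.
Arguments tauP01 {R X tau}.
Arguments tauP_le1 {R X tau}.
Arguments tauP_ge0 {R X tau}.
Arguments tauP_U {R X tau}.
Arguments NP01 {R X tau}.
Arguments NP_le1 {R X tau}.
Arguments NP_ge0 {R X tau}.
Arguments NP_ub {R X tau}.
Arguments NP_gt {R X tau}.

Section Comp.
Variables (R : realType) (X : Type) (tau : set X -> R).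
Hypothesis htau01 : forall A, 0 <= tau A <= 1.
Hypothesis htauT : tau setT = 1.
Hypothesis hP : forall A B : set X,
      tauP tau (A `&` B) >= Num.min (tauP tau A) (tauP tau B).

Definition bigI (s : seq (set X)) := foldr setI setT s.
Definition bigU (s : seq (set X)) := foldr setU set0 s.

Lemma bigI_in s z : bigI s z <-> forall A, List.In A s -> A z.
Proof.
elim: s => [|A s IH] /=; first by split.
split=> [[Az /IH h] B [<-|Bs]|h]; [by []|exact: h|].
by split; [apply: h; left|apply/IH => B Bs; apply: h; right].
Qed.

Lemma bigU_in s z : bigU s z <-> exists A, List.In A s /\ A z.
Proof.
elim: s => [|A s IH] /=; first by split => // -[? []].
split=> [[Az|/IH [B [Bs Bz]]]|[B [[<-|Bs] Bz]]].
- by exists A; split => //; left.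
- by exists B; split => //; right.
- by left.
- by right; apply/IH; exists B.
Qed.

Lemma bigI_ge c s : c <= 1 -> (forall A, List.In A s -> c <= tauP tau A) ->
  c <= tauP tau (bigI s).
Proof.
move=> c1; elim: s => [|A s IH] h /=; first by rewrite tauP_setT.
apply: (le_trans _ (hP _ _)); rewrite le_min h /=; last by left.
by apply: IH => B Bs; apply: h; right.
Qed.

Lemma bigU_ge c s : c <= 1 -> (forall A, List.In A s -> c <= tauP tau A) ->
  c <= tauP tau (bigU s).
Proof.
move=> c1; elim: s => [|A s IH] h /=; first by rewrite tauP_set0.
apply: (le_trans _ (tauP_U htau01 _ _)); rewrite le_min h /=; last by left.
by apply: IH => B Bs; apply: h; right.
Qed.

Lemma rel_ub G V : tauP tau V <= tauP_rel tau G (V `&` G).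
Proof.
by apply: (@ssup_ub _ _ 1) => [_ [W _ <-]|]; [exact: tauP_le1|exists V].
Qed.

Lemma Gamma_le G Re : fam_on G Re -> GammaP tau G <=
  1 - Num.max 0 (Kdeg Re G + incl_deg Re (tauP_rel tau G) - 1)
          + ssup [set Num.max 0 (Kdeg wp G + FF wp - 1)
                 | wp in [set wp | fam_on G wp /\ forall B, wp B <= Re B]].
Proof.
move=> h; set E := (1 - _ + _).
apply: (@le_trans _ _ (Num.min 1 E)); last by rewrite ge_min lexx orbT.
apply: (@iinf_lb _ _ 0) => [_ [Re' _ <-]|]; last by exists Re.
rewrite le_min ler01 /=.
have h1 := iinf_le1 [set ssup [set Re' B | B in [set B | B x]] | x in G].
have h2 := iinf_le1 [set Num.min 1 (1 - Re' B + tauP_rel tau G B) | B in [set B | True]].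
have h3 := ssup_ge0 [set Num.max 0 (Kdeg wp G + FF wp - 1)
                 | wp in [set wp | fam_on G wp /\ forall B, wp B <= Re' B]].
rewrite /Kdeg /incl_deg; set a := iinf _ in h1 *; set b := iinf _ in h2 *.
set c := ssup _ in h3 *.
have : Num.max 0 (a + b - 1) <= 1 by rewrite ge_max ler01 /=; lra.
lra.
Qed.

Lemma EX (I : Type) (f : I -> set X) (K : set X) (k0 : R) :
  0 <= k0 <= 1 -> 1 < GammaP tau K + k0 -> (forall i, k0 <= tauP tau (f i)) ->
  (forall k, K k -> exists i, f i k) ->
  exists s : seq I, forall k, K k -> exists i, List.In i s /\ f i k.
Proof.
move=> /andP[k00 k01] hG hf hcov.
pose Re := fun D : set X => if `[< exists i, D = f i `&` K >] then k0 else 0.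
have ReE D : (Re D = k0 /\ (exists i, D = f i `&` K)) \/
             (Re D = 0 /\ ~ (exists i, D = f i `&` K)).
  by rewrite /Re; case: asboolP => h; [left|right].
have hfam : fam_on K Re.
  split=> [B|B BK].
    by case: (ReE B) => -[-> _]; rewrite ?lexx ?ler01 ?k00 ?k01.
  case: (ReE B) => -[-> // [i Bi]]; exfalso; apply: BK; rewrite Bi.
  exact: subIsetr.
have hinc : 1 <= incl_deg Re (tauP_rel tau K).
  apply: iinf_ge => // _ [B _ <-]; rewrite le_min lexx /=.
  case: (ReE B) => -[-> hB].
    case: hB => i ->; have := rel_ub K (f i); have := hf i; lra.
  have : 0 <= tauP_rel tau K B := ssup_ge0 _.
  lra.
have hK : k0 <= Kdeg Re K.
  apply: iinf_ge => // _ [k Kk <-].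
  have [i fik] := hcov k Kk.
  apply: (@ssup_ub _ _ 1) => [_ [B _ <-]|].
    by case: hfam => h _; case/andP: (h B).
  exists (f i `&` K) => //; rewrite /Re; case: asboolP => // h; exfalso.
  by apply: h; exists i.
have hsp := Gamma_le K Re hfam.
set sp := ssup _ in hsp.
have sp0 : 0 < sp.
  set a := Kdeg Re K + incl_deg Re (tauP_rel tau K) - 1 in hsp.
  have hm : a <= Num.max 0 a by rewrite le_max lexx orbT.
  rewrite /a in hm; lra.
case: (ssup_gt (lexx 0) sp0) => _ [wp [fwp wpRe] <-] hwp.
have hlt : 0 < Kdeg wp K + FF wp - 1 by move: hwp; rewrite lt_max ltxx.
rewrite /FF in hlt.
have hlt' : iinf [set d | 0 <= d <= 1 /\ finite_set [set B | wp B > d]] < Kdeg wp K.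
  lra.
have Kle1 : Kdeg wp K <= 1 by apply: iinf_le1.
case: (iinf_lt Kle1 hlt') => d [/andP[d0 d1] fin] dK.
have [s0 hs0] := (finite_seqP _).1 fin.
have hs0' : forall B, B \in s0 -> exists i, B = f i `&` K.
  move=> B Bs0; have : [set B | d < wp B] B by rewrite hs0.
  move=> /= dB; have := wpRe B; case: (ReE B) => -[-> //] _ hle.
  lra.
have ind : forall s1 : seq (set X), (forall B, B \in s1 -> exists i, B = f i `&` K) ->
    exists s, forall B, B \in s1 -> exists i, List.In i s /\ B = f i `&` K.
  elim=> [|B s1 IH] h; first by exists [::].
  have [i Bi] := h B (mem_head _ _).
  have [s hs] : exists s, forall C, C \in s1 -> exists i, List.In i s /\ C = f i `&` K.
    by apply: IH => C C1; apply: h; rewrite inE C1 orbT.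
  exists (i :: s) => C; rewrite inE => /orP[/eqP ->|/hs [j [js Cj]]].
    by exists i; split => //; left.
  by exists j; split => //; right.
have [s hs] := ind s0 hs0'.
exists s => k Kk.
have : Kdeg wp K <= ssup [set wp B | B in [set B | B k]].
  apply: (@iinf_lb _ _ 0) => [_ [z _ <-]|]; [exact: ssup_ge0|by exists k].
move=> hk; have := lt_le_trans dK hk => /(ssup_gt d0) [_ [B Bk <-] dB].
have : [set B | d < wp B] B by [].
rewrite hs0 => /= /hs [i [si Bi]].
by exists i; split => //; move: Bk; rewrite Bi => -[].
Qed.

Lemma max0_cases (a : R) : (Num.max 0 a = 0 /\ a <= 0) \/ (Num.max 0 a = a /\ 0 <= a).
Proof.
by case: (lerP a 0) => h; [left|right]; split => //; exact: ltW.
Qed.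

Lemma FF_le1 (wp : set X -> R) : FF wp <= 1.
Proof.
rewrite /FF; suff : 0 <= iinf [set d | 0 <= d <= 1 /\ finite_set [set B | wp B > d]] by lra.
by apply: iinf_ge => // d [/andP[]].
Qed.

Lemma Kdeg_le1 (wp : set X -> R) G : Kdeg wp G <= 1.
Proof. exact: iinf_le1. Qed.

Lemma CS K P e : 0 < e ->
  GammaP tau K + tauP tau P - 1 - e <= GammaP tau (K `&` ~` P).
Proof.
move=> e0; set V := K `&` ~` P; set p := tauP tau P.
have p1 := tauP_le1 htau01 P; have p0 := tauP_ge0 htau01 P.
have G1 : GammaP tau K <= 1 by apply: iinf_le1.
apply: iinf_ge; last by rewrite /p; lra.
move=> _ [Re [Re01 Re0] <-].
have Rele1 B : Re B <= 1 by case/andP: (Re01 B).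
have Rege0 B : 0 <= Re B by case/andP: (Re01 B).
set kR := Kdeg Re V; set iR := incl_deg Re (tauP_rel tau V).
set supV := ssup _.
have kR1 : kR <= 1 by apply: iinf_le1.
have iR1 : iR <= 1 by apply: iinf_le1.
have supV0 : 0 <= supV by apply: ssup_ge0.
rewrite le_min; apply/andP; split; first by rewrite /p; lra.
have hW : forall B, exists W, B `<=` V ->
    W `&` V = B /\ tauP_rel tau V B - e < tauP tau W.
  move=> B; have [BV|nBV] := pselect (B `<=` V); last by exists setT.
  have [hneg|hpos] := ltP (tauP_rel tau V B - e) 0.
    exists B => _; split; first exact: setIidl.
    by apply: lt_le_trans hneg _; apply: tauP_ge0.
  have : tauP_rel tau V B - e < tauP_rel tau V B by lra.
  case/(ssup_gt hpos) => _ [W WB <-] hW; by exists W.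
have [Wf hWf] := choice hW.
pose s D := ssup [set Re B | B in [set B | B `<=` V /\ Wf B `&` K = D]].
pose q D := if `[< D = K `&` P >] then p else 0.
pose Re' D := Num.max (s D) (q D).
have s0 D : 0 <= s D by apply: ssup_ge0.
have s1 D : s D <= 1 by apply: ssup_le => // _ [B _ <-].
have q0 D : 0 <= q D by rewrite /q; case: asboolP.
have q1 D : q D <= 1 by rewrite /q; case: asboolP => // _; lra.
have Re'0 D : 0 <= Re' D by rewrite le_max s0.
have Re'1 D : Re' D <= 1 by rewrite ge_max s1 q1.
have VK : V `<=` K by move=> z [].
have WfV B : B `<=` V -> (Wf B `&` K) `&` V = B.
  move=> BV; rewrite -setIA (setIidr VK); by case: (hWf B BV).
have sB B : B `<=` V -> Re B <= s (Wf B `&` K).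
  by move=> BV; apply: (@ssup_ub _ _ 1) => [_ [C _ <-]|]; [exact: Rele1|exists B].
have fam' : fam_on K Re'.
  split=> [D|D DK]; first by rewrite Re'0 Re'1.
  apply/eqP; rewrite eq_le Re'0 andbT ge_max; apply/andP; split.
    apply: ssup_le => // _ [B [BV BD] <-]; exfalso; apply: DK; rewrite -BD.
    exact: subIsetr.
  rewrite /q; case: asboolP => // DKP; exfalso; apply: DK; rewrite DKP.
  exact: subIsetl.
have hinc : iR - e <= incl_deg Re' (tauP_rel tau K).
  apply: iinf_ge; last by lra.
  move=> _ [D _ <-].
  have rK0 : 0 <= tauP_rel tau K D by apply: ssup_ge0.
  suff : Re' D <= 1 - iR + e + tauP_rel tau K D by rewrite le_min; lra.
  rewrite ge_max; apply/andP; split.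
    apply: ssup_le; last by lra.
    move=> _ [B [BV BD] <-].
    have : iR <= 1 - Re B + tauP_rel tau V B.
      apply: le_trans (_ : Num.min 1 (1 - Re B + tauP_rel tau V B) <= _);
        last by rewrite ge_min lexx orbT.
      apply: (@iinf_lb _ _ 0) => [_ [C _ <-]|]; last by exists B.
      rewrite le_min ler01 /=; have := Rele1 C.
      have : 0 <= tauP_rel tau V C by apply: ssup_ge0.
      lra.
    have [_ hlt] := hWf B BV.
    have := rel_ub K (Wf B); rewrite BD => hle.
    lra.
  rewrite /q; case: asboolP => [->|_]; last by lra.
  have := rel_ub K P; rewrite setIC -/p; lra.
have hK : Num.min kR p <= Kdeg Re' K.
  apply: iinf_ge; last by rewrite ge_min kR1.
  move=> _ [k Kk <-].
  have ub' : forall y, [set Re' D | D in [set D | D k]] y -> y <= 1.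
    by move=> _ [D _ <-].
  have [Pk|nPk] := pselect (P k).
    rewrite ge_min; apply/orP; right.
    apply: le_trans (_ : Re' (K `&` P) <= _); last first.
      by apply: (ssup_ub ub'); exists (K `&` P).
    rewrite le_max; apply/orP; right; rewrite /q.
    by case: asboolP => [_|h]; [exact: lexx|exfalso; apply: h].
  rewrite ge_min; apply/orP; left.
  apply: le_trans (_ : ssup [set Re B | B in [set B | B k]] <= _).
    apply: (@iinf_lb _ _ 0) => [_ [z _ <-]|]; [exact: ssup_ge0|by exists k].
  apply: ssup_le; last exact: ssup_ge0.
  move=> _ [B Bk <-].
  have [BV|nBV] := pselect (B `<=` V); last by rewrite Re0 //; exact: ssup_ge0.
  apply: le_trans (sB B BV) _.
  apply: le_trans (_ : Re' (Wf B `&` K) <= _); first by rewrite le_max lexx.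
  apply: (ssup_ub ub'); exists (Wf B `&` K) => //.
  have [hBe _] := hWf B BV.
  have : (Wf B `&` V) k by rewrite hBe.
  by case=> Wk _; split.
have hG := Gamma_le K Re' fam'.
set supK := ssup _ in hG.
have hsup : supK <= supV.
  apply: ssup_le => //.
  move=> _ [wp' [[wp'01 wp'0] wp'Re'] <-].
  pose wp B := if `[< B `<=` V >] then Num.min (Re B) (wp' (Wf B `&` K)) else 0.
  have wp'1 D : wp' D <= 1 by case/andP: (wp'01 D).
  have wp'ge0 D : 0 <= wp' D by case/andP: (wp'01 D).
  have wpfam : fam_on V wp.
    split=> [B1|B1 BV]; last by rewrite /wp; case: asboolP.
    rewrite /wp; case: asboolP => _; last by rewrite lexx ler01.
    by rewrite le_min Rege0 wp'ge0 /= ge_min Rele1.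
  have wpRe B : wp B <= Re B.
    by rewrite /wp; case: asboolP => _; [rewrite ge_min lexx|exact: Rege0].
  have hKd : Kdeg wp' K <= Kdeg wp V.
    apply: iinf_ge; last exact: Kdeg_le1.
    move=> _ [v Vv <-].
    apply: le_trans (_ : ssup [set wp' D | D in [set D | D v]] <= _).
      apply: (@iinf_lb _ _ 0) => [_ [z _ <-]|]; [exact: ssup_ge0|].
      by exists v => //; case: Vv.
    apply: ssup_le; last exact: ssup_ge0.
    move=> _ [D Dv <-].
    have qD : q D = 0.
      rewrite /q; case: asboolP => // DKP; exfalso; case: Vv => _; apply.
      by move: Dv; rewrite DKP => -[].
    have := wp'Re' D; rewrite /Re' qD.
    have [[B [BV BD]]|nex] := pselect (exists B, B `<=` V /\ Wf B `&` K = D).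
      have sle : s D <= Re B.
        apply: ssup_le; last exact: Rege0.
        move=> _ [C [CV CD] <-].
        have : C = B by rewrite -(WfV C CV) -(WfV B BV) CD BD.
        by move=> ->.
      move=> hle.
      have hwp : wp B = wp' D.
        rewrite /wp; case: asboolP => // _; rewrite BD.
        apply/eqP; rewrite eq_le ge_min lexx orbT /= le_min lexx andbT.
        apply: le_trans hle _; rewrite ge_max sle /=; exact: Rege0.
      rewrite -hwp; apply: (@ssup_ub _ _ 1) => [_ [C _ <-]|].
        by case: wpfam => h _; case/andP: (h C).
      exists B => //; rewrite -(WfV B BV) BD; by split.
    have sD : s D <= 0.
      apply: ssup_le => // y [B [BV BD] _]; exfalso; apply: nex; by exists B.
    move=> hle; apply: le_trans (_ : 0 <= _); last exact: ssup_ge0.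
    apply: le_trans hle _; rewrite ge_max sD lexx; by [].
  have hFF : FF wp' <= FF wp.
    rewrite /FF lerD2l lerN2; apply: iinf_ge; last exact: iinf_le1.
    move=> d [/andP[d0 d1] fin].
    apply: (@iinf_lb _ _ 0) => [d' [/andP[]]|] //; split; first by rewrite d0 d1.
    apply: (@sub_finite_set _ _ ((fun D => D `&` V) @` [set D | d < wp' D])).
      move=> B /= dB.
      have BV : B `<=` V.
        apply/asboolP; move: dB; rewrite /wp; case: asboolP => // _; lra.
      exists (Wf B `&` K); last exact: WfV.
      move: dB; rewrite /wp; case: asboolP => // _; rewrite lt_min => /andP[_ ->].
      by [].
    exact: finite_image.
  apply: (@le_trans _ _ (Num.max 0 (Kdeg wp V + FF wp - 1))).
    rewrite ge_max le_max lexx /= le_max; apply/orP; right; lra.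
  apply: (@ssup_ub _ _ 1).
    move=> _ [w _ <-]; rewrite ge_max ler01 /=.
    have := Kdeg_le1 w V; have := FF_le1 w; lra.
  by exists wp.
have hminkp : kR + p - 1 <= Num.min kR p by rewrite le_min; apply/andP; split; lra.
set kR' := Kdeg Re' K in hG hK; set iR' := incl_deg Re' (tauP_rel tau K) in hG hinc.
have hm' : kR' + iR' - 1 <= Num.max 0 (kR' + iR' - 1) by rewrite le_max lexx orbT.
case: (max0_cases (kR + iR - 1)) => -[-> hh].
  rewrite /p; lra.
rewrite /p; lra.
Qed.


Lemma In_map (T U : Type) (g : T -> U) (s : seq T) A :
  List.In A (map g s) -> exists c, List.In c s /\ A = g c.
Proof.
elim: s => [|c s IH] //= [<-|/IH [d [ds ->]]]; first by exists c; split => //; left.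
by exists d; split => //; right.
Qed.

Lemma map_In (T U : Type) (g : T -> U) (s : seq T) c :
  List.In c s -> List.In (g c) (map g s).
Proof. by elim: s => [|d s IH] //= [->|/IH]; [left|right]. Qed.


Arguments In_map {T U} g {s A}.
Arguments map_In {T U} g {s c}.

Lemma tauPI_ge c A B : c <= tauP tau A -> c <= tauP tau B -> c <= tauP tau (A `&` B).
Proof. by move=> hA hB; apply: (le_trans _ (hP _ _)); rewrite le_min hA hB. Qed.

Lemma Sep p q c : p <> q -> 0 <= c -> c < T2P tau ->
  exists BC : set X * set X, [/\ BC.1 `&` BC.2 = set0, BC.1 p, BC.2 q,
      c < tauP tau BC.1 & c < tauP tau BC.2].
Proof.
move=> pq c0 ct.
have : T2P tau <= ssup [set Num.min (NP tau p BC.1) (NP tau q BC.2)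
                 | BC in [set BC : set X * set X | BC.1 `&` BC.2 = set0]].
  apply: (@iinf_lb _ _ 0) => [_ [xy _ <-]|]; first exact: ssup_ge0.
  by exists (p, q).
move=> h; have := lt_le_trans ct h => /(ssup_gt c0) [_ [[B C] /= BC <-]].
rewrite lt_min => /andP[hB hC].
have [B' [B'p B'B cB']] := NP_gt p B c c0 hB.
have [C' [C'q C'C cC']] := NP_gt q C c c0 hC.
exists (B', C'); split => //=.
apply/seteqP; split => [z [/B'B zB /C'C zC]|z []] //.
by rewrite -BC; split.
Qed.

Lemma main_sec x U :
    Num.max 0 (T2P tau + 2 * LPC tau - 2) <=
    Num.min 1 (1 - NP tau x U +
      ssup [set Num.min (NP tau x V)
                 (Num.min (iinf [set NP tau y (~` V) | y in ~` U]) (GammaP tau V))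
           | V in [set V : set X | True]]).
Proof.
set t := T2P tau; set l := LPC tau; set u := NP tau x U; set S := ssup _.
have t1 : t <= 1 by apply: iinf_le1.
have l1 : l <= 1 by apply: iinf_le1.
have u1 : u <= 1 := NP_le1 htau01 x U; have u0 : 0 <= u := NP_ge0 htau01 x U.
have S0 : 0 <= S by apply: ssup_ge0.
suff hS : t + 2 * l + u - 3 <= S.
  rewrite ge_max !le_min; apply/andP; split; apply/andP; split; rewrite -/u; lra.
set d := t + 2 * l + u - 3.
have dE : d = t + 2 * l + u - 3 by [].
have [dle|dpos] := lerP d 0; first by lra.
suff key : forall eta, 0 < eta -> 2 * eta < d -> d - 3 * eta <= S.
  rewrite leNgt; apply/negP => Sd.
  have e0 : 0 < (d - S) / 4 by lra.
  have e2 : 2 * ((d - S) / 4) < d by lra.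
  have := key _ e0 e2; lra.
move=> eta eta0 eta2.
have : l <= ssup [set Num.max 0 (NP tau x B + GammaP tau B - 1) | B in [set B | True]].
  apply: (@iinf_lb _ _ 0) => [_ [z _ <-]|]; [exact: ssup_ge0|by exists x].
move=> hl.
have le0 : 0 <= l - eta by lra.
have : l - eta < ssup [set Num.max 0 (NP tau x B + GammaP tau B - 1) | B in [set B | True]].
  lra.
case/(ssup_gt le0) => _ [K _ <-] hK.
set a := NP tau x K in hK; set g := GammaP tau K in hK.
have a1 : a <= 1 by apply: NP_le1.
have g1 : g <= 1 by apply: iinf_le1.
have hag : l - eta < a + g - 1.
  by case: (max0_cases (a + g - 1)) => -[hm hh]; move: hK; rewrite hm; lra.
have ae0 : 0 <= a - eta by lra.
have aet : a - eta < a by lra.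
have [O0 [O0x O0K hO0]] := NP_gt x K (a - eta) ae0 aet.
have ue0 : 0 <= u - eta by lra.
have uet : u - eta < u by lra.
have [W0 [W0x W0U hW0]] := NP_gt x U (u - eta) ue0 uet.
set W := O0 `&` W0.
have Wx : W x by split.
have WK : W `<=` K by move=> z [/O0K].
have WU : W `<=` U by move=> z [_ /W0U].
have hW : Num.min (u - eta) (a - eta) <= tauP tau W.
  by apply: tauPI_ge; rewrite ge_min; apply/orP; [right|left]; apply: ltW.
have te0 : 0 <= t - eta by clear -t1 l1 u1 dE eta2 eta0; lra.
have tet : t - eta < t by clear -eta0; lra.
have hsep : forall c, exists BC : set X * set X, c <> x ->
   [/\ BC.1 `&` BC.2 = set0, BC.1 x, BC.2 c, t - eta < tauP tau BC.1 & t - eta < tauP tau BC.2].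
  move=> c; have [cx|ncx] := pselect (c = x); first by exists (set0, set0).
  have [BC hBC] := Sep x c (t - eta) (fun h => ncx (esym h)) te0 tet.
  by exists BC.
have [fB hfB] := choice hsep.
pose f c := if `[< c = x >] then W else (fB c).2.
pose k1 := Num.min (Num.min (u - eta) (a - eta)) (t - eta).
have hk1 : 1 < g + k1.
  suff : 1 - g < k1 by clear; lra.
  rewrite !lt_min; apply/andP; split; [apply/andP; split|];
    clear -hag a1 g1 t1 l1 u1 dE eta2 eta0; lra.
have k10 : 0 <= k1.
  rewrite !le_min; apply/andP; split; [apply/andP; split|]; 
    clear -hag a1 g1 t1 l1 u1 dE eta2 eta0; lra.
have k11 : k1 <= 1 by rewrite ge_min; apply/orP; right; clear -t1 eta0; lra.
have hf : forall c, k1 <= tauP tau (f c).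
  move=> c; rewrite /f; case: asboolP => cx.
    by apply: le_trans hW; rewrite ge_min lexx.
  have [_ _ _ _ h] := hfB c cx.
  by rewrite ge_min; apply/orP; right; apply: ltW.
have hcov : forall k, K k -> exists c, f c k.
  move=> k Kk; have [kx|nkx] := pselect (k = x).
    by exists x; rewrite /f; case: asboolP => // _; rewrite kx.
  exists k; rewrite /f; case: asboolP => // _.
  by have [] := hfB k nkx.
have k101 : 0 <= k1 <= 1 by rewrite k10 k11.
have [s1 hs1] := @EX X f K k1 k101 hk1 hf hcov.
pose gB c := if `[< c = x >] then setT else (fB c).1.
pose gC c := if `[< c = x >] then set0 else (fB c).2.
pose O := W `&` bigI (map gB s1).
pose P := bigU (map gC s1).
have Ox : O x.
  split => //; apply/bigI_in => A /(In_map _) [c [cs ->]]; rewrite /gB.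
  case: asboolP => // cx.
  by have [] := hfB c cx.
have OK : O `<=` K by move=> z [/WK].
have OP : forall z, O z -> P z -> False.
  move=> z [_ /bigI_in hz] /bigU_in [A [/(In_map _) [c [cs ->]]]].
  rewrite /gC; case: asboolP => [_ []|cx Cz].
  have [hd _ _ _ _] := hfB c cx.
  have := hz (gB c) (map_In _ cs); rewrite /gB.
  case: asboolP => [h|_ Bz]; first by exfalso; exact: cx h.
  have : ((fB c).1 `&` (fB c).2) z by split.
  by rewrite hd.
have KWP : forall k, K k -> W k \/ P k.
  move=> k Kk; have [c [cs fck]] := hs1 k Kk; move: fck; rewrite /f.
  case: asboolP => cx fck; [by left|right].
  apply/bigU_in; exists (gC c); split; first exact: map_In.
  rewrite /gC; case: asboolP => [h|_ //]; exfalso; exact: cx h.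
have hbigB : t - eta <= tauP tau (bigI (map gB s1)).
  apply: bigI_ge => [|A /(In_map _) [c [_ ->]]]; first by clear -t1 eta0; lra.
  rewrite /gB; case: asboolP => cx.
    by rewrite tauP_setT //; clear -t1 eta0; lra.
  by have [_ _ _ h _] := hfB c cx; apply: ltW.
have hbigC : t - eta <= tauP tau P.
  apply: bigU_ge => [|A /(In_map _) [c [_ ->]]]; first by clear -t1 eta0; lra.
  rewrite /gC; case: asboolP => cx.
    by rewrite tauP_set0 //; clear -t1 eta0; lra.
  by have [_ _ _ _ h] := hfB c cx; apply: ltW.
have hO : d - 3 * eta <= tauP tau O.
  apply: tauPI_ge.
    apply: le_trans hW; rewrite le_min; apply/andP; split;
      clear -hag a1 g1 t1 l1 u1 dE eta2 eta0; lra.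
  apply: le_trans hbigB; clear -t1 l1 u1 dE eta0; lra.
pose V := K `&` ~` P.
have OV : O `<=` V by move=> z Oz; split; [exact: OK|move=> Pz; exact: OP z Oz Pz].
have hNx : d - 3 * eta <= NP tau x V.
  by apply: le_trans hO _; apply: NP_ub htau01 x V O Ox OV.
have hNy : forall y, ~ U y -> t - eta <= NP tau y (~` V).
  move=> y nUy; have [Ky|nKy] := pselect (K y).
    have Py : P y by case: (KWP y Ky) => // /WU.
    apply: le_trans hbigC _; apply: (NP_ub htau01 y _ _ Py).
    by move=> z Pz [_ nPz]; exact: nPz Pz.
  have hsep2 : forall c, exists BC : set X * set X, c <> y ->
     [/\ BC.1 `&` BC.2 = set0, BC.1 y, BC.2 c, t - eta < tauP tau BC.1 &
         t - eta < tauP tau BC.2].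
    move=> c; have [cy|ncy] := pselect (c = y); first by exists (set0, set0).
    have [BC hBC] := Sep y c (t - eta) (fun h => ncy (esym h)) te0 tet.
    by exists BC.
  have [fB2 hfB2] := choice hsep2.
  pose f2 c := if `[< c = y >] then set0 else (fB2 c).2.
  have hk2 : 1 < g + (t - eta) by clear -hag a1 g1 t1 l1 u1 dE eta2 eta0; lra.
  have k201 : 0 <= t - eta <= 1 by rewrite te0 /=; clear -t1 eta0; lra.
  have hf2 : forall c, t - eta <= tauP tau (f2 c).
    move=> c; rewrite /f2; case: asboolP => cy.
      by rewrite tauP_set0 //; clear -t1 eta0; lra.
    by have [_ _ _ _ h] := hfB2 c cy; apply: ltW.
  have hcov2 : forall k, K k -> exists c, f2 c k.
    move=> k Kk; have ky : k <> y by move=> ky; apply: nKy; rewrite -ky.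
    exists k; rewrite /f2; case: asboolP => [h|_]; first by exfalso; exact: ky h.
    by have [] := hfB2 k ky.
  have [s2 hs2] := @EX X f2 K (t - eta) k201 hk2 hf2 hcov2.
  pose gB2 c := if `[< c = y >] then setT else (fB2 c).1.
  pose Q := bigI (map gB2 s2).
  have Qy : Q y.
    apply/bigI_in => A /(In_map _) [c [_ ->]]; rewrite /gB2; case: asboolP => // cy.
    by have [] := hfB2 c cy.
  have QV : Q `<=` ~` V.
    move=> z /bigI_in hz [Kz _].
    have [c [cs fcz]] := hs2 z Kz; move: fcz; rewrite /f2.
    case: asboolP => [_ []|cy Cz].
    have [hd _ _ _ _] := hfB2 c cy.
    have := hz (gB2 c) (map_In _ cs); rewrite /gB2.
    case: asboolP => [h|_ Bz]; first by exfalso; exact: cy h.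
    have : ((fB2 c).1 `&` (fB2 c).2) z by split.
    by rewrite hd.
  have hQ : t - eta <= tauP tau Q.
    apply: bigI_ge => [|A /(In_map _) [c [_ ->]]]; first by clear -t1 eta0; lra.
    rewrite /gB2; case: asboolP => cy.
      by rewrite tauP_setT //; clear -t1 eta0; lra.
    by have [_ _ _ h _] := hfB2 c cy; apply: ltW.
  by apply: le_trans hQ _; exact: (NP_ub htau01 y _ _ Qy QV).
have hinf : d - 3 * eta <= iinf [set NP tau y (~` V) | y in ~` U].
  apply: iinf_ge; last by clear -t1 l1 u1 dE eta0 eta2 dpos; lra.
  move=> _ [y nUy <-]; apply: le_trans (hNy y nUy); clear -t1 l1 u1 dE eta0; lra.
have hG : d - 3 * eta <= GammaP tau V.
  have hcs : g + tauP tau P - 1 - eta <= GammaP tau V := CS K P eta eta0.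
  apply: le_trans hcs; clear -hbigC hag a1 g1 t1 l1 u1 dE eta0 eta2; lra.
apply: (@le_trans _ _ (Num.min (NP tau x V)
   (Num.min (iinf [set NP tau y (~` V) | y in ~` U]) (GammaP tau V)))).
  by rewrite !le_min hNx hinf hG.
apply: (@ssup_ub _ _ 1); last by exists V.
move=> _ [W' _ <-]; rewrite ge_min; apply/orP; left; exact: NP_le1.
Qed.

End Comp.

Theorem theorem4p3 (R : realType) (X : Type) (tau : set X -> R)
  (htau : fuzzifying_topology tau)
  (hP : forall A B : set X,
      tauP tau (A `&` B) >= Num.min (tauP tau A) (tauP tau B)) :
  forall (x : X) (U : set X),
    Num.max 0 (T2P tau + 2 * LPC tau - 2) <=
    Num.min 1 (1 - NP tau x U +
      ssup [set Num.min (NP tau x V)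
                 (Num.min (iinf [set NP tau y (~` V) | y in ~` U]) (GammaP tau V))
           | V in [set V : set X | True]]).
Proof.
move=> x U; case: htau => h01 [hT _].
by apply: main_sec.
Qed.
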